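(* Let $q\ge2$, $k>0$, and $p\ge q+k+1$, and let $V(x)=\frac{x^p}{p}-\frac{x^q}{q}$ for $x\ge0$, so $V'(x)=x^{p-1}-x^{q-1}$. Let $c\in(0,1)$ be the unique solution in $(0,1)$ of $x^{q+k}-x^{q-1}=k(x-1)$. Then $(x-1)V'(x)\ge k(x-1)^2$ for all $x\in[c,\infty)$. *)

(* Defs.v *)
(* real exponents via Rpower (x^a := exp (a * ln x), valid for x > 0). *)
From Stdlib Require Import Reals.
Open Scope R_scope.

Definition V (p q x : R) : R := Rpower x p / p - Rpower x q / q.

Definition Vprime (p q x : R) : R := Rpower x (p - 1) - Rpower x (q - 1).

Definition c_eq (q k x : R) : Prop :=
  Rpower x (q + k) - Rpower x (q - 1) = k * (x - 1).

(* Main.v *)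
Require Import Defs.
From Stdlib Require Import Reals Lra.
Open Scope R_scope.

Lemma Rpower_1_base (y : R) : Rpower 1 y = 1.
Proof. unfold Rpower. rewrite ln_1, Rmult_0_r. apply exp_0. Qed.

Lemma Rpower_pos (x y : R) : 0 < Rpower x y.
Proof. unfold Rpower. apply exp_pos. Qed.

Lemma tangent (a x y : R) : 0 < x -> 0 < y -> 1 <= a ->
  Rpower x a + a * Rpower x (a - 1) * (y - x) <= Rpower y a.
Proof.
  intros hx hy ha.
  set (f := fun u => Rpower u a - a * Rpower x (a - 1) * u).
  set (f' := fun u => a * Rpower u (a - 1) - a * Rpower x (a - 1)).
  assert (hd : forall u, 0 < u -> derivable_pt_lim f u (f' u)).
  { intros u hu. unfold f, f'.
    apply derivable_pt_lim_minus.
    - now apply derivable_pt_lim_power.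
    - replace (a * Rpower x (a - 1)) with (a * Rpower x (a - 1) * 1) at 2 by ring.
      apply derivable_pt_lim_scal. apply derivable_pt_lim_id. }
  destruct (Rtotal_order x y) as [hlt | [heq | hgt]].
  - destruct (MVT_cor2 f f' x y hlt) as [c [hc1 hc2]].
    { intros c hc. apply hd. lra. }
    unfold f, f' in hc1.
    assert (Rpower x (a - 1) <= Rpower c (a - 1)).
    { apply Rle_Rpower_l; lra. }
    assert (0 <= (a * Rpower c (a - 1) - a * Rpower x (a - 1)) * (y - x)).
    { apply Rmult_le_pos; nra. }
    nra.
  - subst. lra.
  - destruct (MVT_cor2 f f' y x hgt) as [c [hc1 hc2]].
    { intros c hc. apply hd. lra. }
    unfold f, f' in hc1.
    assert (Rpower c (a - 1) <= Rpower x (a - 1)).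
    { apply Rle_Rpower_l; lra. }
    assert (0 <= (a * Rpower x (a - 1) - a * Rpower c (a - 1)) * (x - y)).
    { apply Rmult_le_pos; nra. }
    nra.
Qed.

Theorem lemma4 (q k p c : R)
  (hq : 2 <= q) (hk : 0 < k) (hp : q + k + 1 <= p)
  (hc : 0 < c < 1) (hceq : c_eq q k c)
  (hcuniq : forall y : R, 0 < y < 1 -> c_eq q k y -> y = c) :
  forall x : R, c <= x -> (x - 1) * Vprime p q x >= k * (x - 1) ^ 2.
Proof.
  intros x hx. unfold Vprime. apply Rle_ge.
  assert (hx0 : 0 < x) by lra.
  destruct (Rle_or_lt 1 x) as [h1 | h1].
  - assert (hA : 1 <= Rpower x (q - 1)).
    { pose proof (Rle_Rpower x 0 (q - 1) h1 ltac:(lra)) as HH.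
      rewrite (Rpower_O x hx0) in HH. exact HH. }
    assert (hB : 1 + (p - q) * (x - 1) <= Rpower x (p - q)).
    { pose proof (tangent (p - q) 1 x ltac:(lra) hx0 ltac:(lra)) as T.
      rewrite !Rpower_1_base in T. lra. }
    assert (hsplit : Rpower x (p - 1) = Rpower x (q - 1) * Rpower x (p - q)).
    { rewrite <- Rpower_plus. f_equal. ring. }
    rewrite hsplit.
    assert (k * (x - 1) <= Rpower x (q - 1) * Rpower x (p - q) - Rpower x (q - 1)).
    { assert (0 <= (Rpower x (q - 1) - 1) * ((p - q) * (x - 1))).
      { apply Rmult_le_pos; [lra|]. apply Rmult_le_pos; lra. }
      assert (Rpower x (q - 1) * (Rpower x (p - q) - 1) >= Rpower x (q - 1) * ((p - q) * (x - 1))).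
      { apply Rle_ge, Rmult_le_compat_l; lra. }
      nra. }
    replace (k * (x - 1) ^ 2) with ((x - 1) * (k * (x - 1))) by ring.
    apply Rmult_le_compat_l; lra.
  - set (a := k + 1).
    assert (hle : Rpower x (p - 1) <= Rpower x (q + k)).
    { replace (p - 1) with ((q + k) + (p - 1 - (q + k))) by ring.
      rewrite Rpower_plus.
      assert (Rpower x (p - 1 - (q + k)) <= 1).
      { pose proof (Rle_Rpower_l x 1 (p - 1 - (q + k)) ltac:(lra) ltac:(lra)) as HH.
        rewrite Rpower_1_base in HH. exact HH. }
      pose proof (Rpower_pos x (q + k)). nra. }
    assert (hsx : Rpower x (q + k) = Rpower x (q - 1) * Rpower x a).
    { rewrite <- Rpower_plus. f_equal. unfold a. ring. }
    assert (hsc : Rpower c (q + k) = Rpower c (q - 1) * Rpower c a).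
    { rewrite <- Rpower_plus. f_equal. unfold a. ring. }
    unfold c_eq in hceq. rewrite hsc in hceq.
    pose proof (tangent a x c hx0 ltac:(lra) ltac:(unfold a; lra)) as T1.
    pose proof (tangent a x 1 hx0 ltac:(lra) ltac:(unfold a; lra)) as T2.
    rewrite Rpower_1_base in T2.
    set (D := a * Rpower x (a - 1)) in *.
    assert (hD : 0 <= D).
    { unfold D. pose proof (Rpower_pos x (a - 1)). apply Rmult_le_pos; [unfold a|]; lra. }
    set (u := 1 - Rpower x a).
    assert (hu : D * (1 - x) <= u) by (unfold u; nra).
    assert (hconv : (1 - Rpower c a) * (1 - x) <= u * (1 - c)).
    { assert (1 - Rpower c a <= u + D * (x - c)) by (unfold u; nra).
      assert ((1 - Rpower c a) * (1 - x) <= (u + D * (x - c)) * (1 - x)) by nra.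
      nra. }
    assert (hmon : Rpower c (q - 1) <= Rpower x (q - 1)).
    { apply Rle_Rpower_l; lra. }
    pose proof (Rpower_pos c (q - 1)).
    assert (hca : 0 <= 1 - Rpower c a) by nra.
    assert (hkey : k * (1 - x) <= Rpower x (q - 1) * u).
    { assert (Rpower c (q - 1) * ((1 - Rpower c a) * (1 - x))
              <= Rpower x (q - 1) * (u * (1 - c))).
      { apply Rmult_le_compat; nra. }
      assert (k * (1 - c) * (1 - x) <= Rpower x (q - 1) * u * (1 - c)) by nra.
      nra. }
    unfold u in hkey.
    assert (Rpower x (p - 1) - Rpower x (q - 1) <= k * (x - 1)) by nra.
    nra.
Qed.
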